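(* Let $m$ be a non-negative integer and let $S=(u_0,\dots,u_{n-1})$ be an antisymmetric finite sequence of elements of $\mathbb{Z}/m\mathbb{Z}$. Then the Steinhaus triangle $\Delta S$ is balanced if and only if the triangle $\nabla S$ is balanced.
   Context: $S$ is antisymmetric if $u_{n-1-j}=-u_j$ for all $j\in\{0,\dots,n-1\}$. The Steinhaus triangle $\Delta S$ is $(a_{i,j})_{i,j\ge0,\,i+j<n}$ with $a_{0,j}=u_j$ and $a_{i,j}=a_{i-1,j}+a_{i-1,j+1}$ for $i\ge1$; the triangle $\nabla S$ is $(b_{i,j})_{i,j\ge0,\,i+j<n}$ with $b_{0,j}=u_j$ and $b_{i,j}=-b_{i-1,j}-b_{i-1,j+1}$ for $i\ge1$. A triangle is balanced if every element of $\mathbb{Z}/m\mathbb{Z}$ occurs the same number of times among its entries. *)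

(* Defs.v *)
(* Z/mZ is modelled by int with the canonical residue map
   x |-> (x %% m)%Z (for m = 0 this is the identity, i.e. Z/0Z = Z). *)
From mathcomp Require Import all_boot all_order all_algebra.
Set Implicit Arguments. Unset Strict Implicit. Unset Printing Implicit Defensive.
Import Order.TTheory GRing.Theory Num.Theory.
Local Open Scope ring_scope.

Definition useq (S : seq int) (j : nat) : int := nth 0 S j.

Definition antisymmetric_mod (m : nat) (S : seq int) : Prop :=
  forall j : nat, (j < size S)%N ->
    (useq S (size S - 1 - j) = - useq S j %[mod (m : int)])%Z.

Fixpoint delta_entry (m : nat) (S : seq int) (i j : nat) : int :=
  match i with
  | 0 => (useq S j %% (m : int))%Z
  | i'.+1 => ((delta_entry m S i' j + delta_entry m S i' j.+1) %% (m : int))%Z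
  end.

Fixpoint nabla_entry (m : nat) (S : seq int) (i j : nat) : int :=
  match i with
  | 0 => (useq S j %% (m : int))%Z
  | i'.+1 => ((- nabla_entry m S i' j - nabla_entry m S i' j.+1) %% (m : int))%Z
  end.

Definition triangle_entries (n : nat) (t : nat -> nat -> int) : seq int :=
  [seq t i j | i <- iota 0 n, j <- iota 0 (n - i)].

Definition balanced (m : nat) (n : nat) (t : nat -> nat -> int) : Prop :=
  forall x y : int,
    count (fun a => (a == x %[mod (m : int)])%Z) (triangle_entries n t) =
    count (fun a => (a == y %[mod (m : int)])%Z) (triangle_entries n t).

Definition Delta_balanced (m : nat) (S : seq int) : Prop :=
  balanced m (size S) (delta_entry m S).
Definition Nabla_balanced (m : nat) (S : seq int) : Prop :=
  balanced m (size S) (nabla_entry m S).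

(* Main.v *)
Require Import Defs.
From mathcomp Require Import all_boot all_order all_algebra.
From mathcomp Require Import ring zify.
Set Implicit Arguments. Unset Strict Implicit. Unset Printing Implicit Defensive.
Import Order.TTheory GRing.Theory Num.Theory.
Local Open Scope ring_scope.

Section Aux.
Variables (m : nat) (S : seq int).
Local Notation md := (m : int).

Lemma cmod (a : int) : (md %| (a %% md)%Z - a)%Z.
Proof. by rewrite -eqz_mod_dvd; apply/eqP; exact: modz_mod. Qed.

Lemma nabla_delta i j :
  (md %| nabla_entry m S i j - (-1) ^+ i * delta_entry m S i j)%Z.
Proof.
elim: i j => [|i IH] j /=.
  by rewrite expr0 mul1r subrr dvdz0.
set N0 := nabla_entry m S i j; set N1 := nabla_entry m S i j.+1.
set D0 := delta_entry m S i j; set D1 := delta_entry m S i j.+1.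
have -> : ((- N0 - N1) %% md)%Z - (-1) ^+ i.+1 * ((D0 + D1) %% md)%Z =
  (((- N0 - N1) %% md)%Z - (- N0 - N1)) - (N0 - (-1)^+i * D0)
  - (N1 - (-1)^+i * D1) + (-1) ^+ i * (((D0 + D1) %% md)%Z - (D0 + D1)).
  by rewrite exprS; ring.
apply: rpredD; first (apply: rpredB; first apply: rpredB).
- exact: cmod.
- exact: IH.
- exact: IH.
- by apply: dvdz_mull; apply: cmod.
Qed.

Lemma P_cong (x a b : int) : (md %| a - b)%Z ->
  (a == x %[mod md])%Z = (b == x %[mod md])%Z.
Proof.
move=> h; rewrite !eqz_mod_dvd.
have -> : a - x = (a - b) + (b - x) by ring.
by rewrite rpredDl.
Qed.

Hypothesis anti : antisymmetric_mod m S.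

Lemma delta_anti i j : (j < size S - i)%N ->
  (md %| delta_entry m S i (size S - i - 1 - j) + delta_entry m S i j)%Z.
Proof.
elim: i j => [|i IH] j hj /=.
  have hj' : (j < size S)%N by rewrite subn0 in hj.
  have := anti hj'; move/eqP; rewrite eqz_mod_dvd subn0 => h.
  rewrite -!/(useq S _).
  have -> : (useq S (size S - 1 - j) %% md)%Z + (useq S j %% md)%Z =
    ((useq S (size S - 1 - j) %% md)%Z - useq S (size S - 1 - j))
    + ((useq S j %% md)%Z - useq S j) + (useq S (size S - 1 - j) - - useq S j)
    by ring.
  apply: rpredD; first apply: rpredD.
  - exact: cmod.
  - exact: cmod.
  - by [].
have e : (size S - i.+1 - 1 - j).+1 = (size S - i - 1 - j)%N.
  by lia.
rewrite e.
set A := delta_entry m S i (size S - i.+1 - 1 - j).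
set B := delta_entry m S i (size S - i - 1 - j).
set C := delta_entry m S i j; set D := delta_entry m S i j.+1.
have eA : (size S - i.+1 - 1 - j = size S - i - 1 - j.+1)%N.
  lia.
have h1 := IH j.+1 ltac:(lia).
have h2 := IH j ltac:(lia).
rewrite -eA -/A in h1; rewrite -/B -/C in h2; rewrite -/D in h1.
have -> : ((A + B) %% md)%Z + ((C + D) %% md)%Z =
   (((A + B) %% md)%Z - (A + B)) + (((C + D) %% md)%Z - (C + D))
   + (A + D) + (B + C) by ring.
apply: rpredD; first apply: rpredD; first apply: rpredD.
- exact: cmod.
- exact: cmod.
- exact: h1.
  exact: h2.
Qed.

Lemma row_count (x : int) i : (i < size S)%N ->
  count (fun a => (a == x %[mod md])%Z)
    [seq nabla_entry m S i j | j <- iota 0 (size S - i)] =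
  count (fun a => (a == x %[mod md])%Z)
    [seq delta_entry m S i j | j <- iota 0 (size S - i)].
Proof.
move=> hi; rewrite !count_map.
case: (boolP (odd i)) => oi.
- set k := (size S - i)%N.
  have er : rev (iota 0 k) = map (fun j => k - 1 - j)%N (iota 0 k).
    apply: (@eq_from_nth _ 0%N); first by rewrite size_rev !size_map size_iota.
    move=> l; rewrite size_rev size_iota => hl.
    rewrite nth_rev ?size_iota // (nth_map 0%N) ?size_iota // !nth_iota //;
      last by lia.
    by lia.
  transitivity (count (preim (delta_entry m S i) (fun a => (a == x %[mod md])%Z)) (rev (iota 0 k))); last exact: count_rev.
  rewrite er count_map; apply: eq_in_count => j; rewrite mem_iota add0n => /andP [_ hj] /=.
  apply: P_cong.
  have h := nabla_delta i j.
  rewrite -signr_odd oi expr1 in h.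
  have h2 := delta_anti hj.
  have -> : nabla_entry m S i j - delta_entry m S i (k - 1 - j) =
    (nabla_entry m S i j - (-1) * delta_entry m S i j) -
    (delta_entry m S i (size S - i - 1 - j) + delta_entry m S i j) by rewrite /k; ring.
  by apply: rpredB.
- apply: eq_in_count => j _ /=.
  apply: P_cong.
  have h := nabla_delta i j.
  by rewrite -signr_odd (negbTE oi) expr0 mul1r in h.
Qed.

End Aux.

Theorem corollary1 (m : nat) (S : seq int) :
  antisymmetric_mod m S -> (Delta_balanced m S <-> Nabla_balanced m S).
Proof.
move=> anti.
have key : forall x, count (fun a => (a == x %[mod (m : int)])%Z) (triangle_entries (size S) (nabla_entry m S)) =
   count (fun a => (a == x %[mod (m : int)])%Z) (triangle_entries (size S) (delta_entry m S)).
  move=> x; rewrite /triangle_entries !count_flatten; congr sumn.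
  rewrite -!map_comp; apply/eq_in_map => i; rewrite mem_iota add0n => /andP [_ hi].
  exact: (row_count anti x hi).
rewrite /Delta_balanced /Nabla_balanced /balanced; split => h x y.
- by rewrite !key.
- by rewrite -!key.
Qed.
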